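(* If $X$ is a uniformly joinable uniform space and $x_0\in X$, then $\mathrm{pro}\text{-}\pi_1(GP(X,x_0),y_0)$ is trivial, where $y_0$ is the constant generalized path at $x_0$.
   Context: $R(Z,E)$ is the Rips complex of a uniform space $Z$ (vertex set $Z$, simplices the finite $F$ with $F\times F\subset E$); $e(x,y)$ is the edge-path. $\mathrm{pro}\text{-}\pi_1(Z,z)=\{\pi_1(R(Z,E),z)\}_E$ (reverse inclusion, inclusion-induced maps); it is trivial if for every $E$ there is $F\subset E$ with $\pi_1(R(Z,F),z)\to\pi_1(R(Z,E),z)$ trivial. Paths $c,d$ in $R(X,E)$ with end-points in $X$ are $E$-homotopic if their initial points $x_c,x_d$ and terminal points $y_c,y_d$ satisfy $(x_c,x_d),(y_c,y_d)\in E$ and $c\simeq e(x_c,x_d)\ast d\ast e(y_d,y_c)$ rel. end-points in $R(X,E)$. A generalized path from $x$ to $y$ is a family $\{[c_E]\}_E$ of homotopy classes rel. end-points of paths from $x$ to $y$ in $R(X,E)$ with $c_F\simeq c_E$ in $R(X,E)$ for $F\subset E$; it is $F$-short if $(x,y)\in F$ and $c_F\simeq e(x,y)$ in $R(X,F)$. $GP(X,x_0)$ is the set of generalized paths starting at $x_0$ with the uniform structure whose base consists of the sets $F^\ast$ of pairs $(c,d)$ with $c_F$ $F$-homotopic to $d_F$. $X$ is uniformly joinable if for each entourage $E$ there is an entourage $F$ such that any $(x,y)\in F$ are joined by an $E$-short generalized path. *)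

(* Defs.v *)
From Stdlib Require Import List Relations.
Import ListNotations.
Set Implicit Arguments.

Record UniformSpace : Type := {
  carrier :> Type;
  entourage : (carrier -> carrier -> Prop) -> Prop }.

Definition subrel {T : Type} (F E : T -> T -> Prop) : Prop :=
  forall a b, F a b -> E a b.

Definition is_uniform (X : UniformSpace) : Prop :=
  (exists E, entourage X E) /\
  (forall E, entourage X E -> forall x, E x x) /\
  (forall E F, entourage X E -> subrel E F -> entourage X F) /\
  (forall E F, entourage X E -> entourage X F ->
       entourage X (fun a b => E a b /\ F a b)) /\
  (forall E, entourage X E -> entourage X (fun a b => E b a)) /\
  (forall E, entourage X E -> exists F, entourage X F /\
       forall a b c, F a b -> F b c -> E a c).

Section Rips.
Variable T : Type.
Variable E : T -> T -> Prop.

(* {a,b} is a simplex of R(T,E): {a,b} x {a,b} is contained in E. *)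
Definition Redge (a b : T) : Prop := E a a /\ E a b /\ E b a /\ E b b.

Definition Rsimplex3 (u v w : T) : Prop :=
  Redge u v /\ Redge v w /\ Redge u w.

Fixpoint echain (p : list T) : Prop :=
  match p with
  | a :: ((b :: _) as q) => Redge a b /\ echain q
  | _ => True
  end.

Definition is_epath (x y : T) (p : list T) : Prop :=
  hd_error p = Some x /\ last p x = y /\ echain p.

Inductive ep_step : list T -> list T -> Prop :=
| ep_dup : forall l1 u l2, ep_step (l1 ++ u :: u :: l2) (l1 ++ u :: l2)
| ep_tri : forall l1 u v w l2, Rsimplex3 u v w ->
    ep_step (l1 ++ u :: v :: w :: l2) (l1 ++ u :: w :: l2).

(* edge-path equivalence = homotopy rel. end-points in R(T,E) *)
Definition ep_equiv : list T -> list T -> Prop :=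
  clos_refl_sym_trans (list T) ep_step.

End Rips.

Definition pro_pi1_trivial (Z : UniformSpace) (z : Z) : Prop :=
  forall E, entourage Z E ->
    exists F, entourage Z F /\ subrel F E /\
      forall p, is_epath F z z p -> ep_equiv E p [z].

(* A generalized path starting at x0 (ending at gp_end): for each entourage
   E, gp_cls E is a homotopy class rel. end-points of edge paths from x0 to
   gp_end in R(X,E) (a set of edge paths); the classes are compatible.
   For non-entourages the field is empty (so that the record is determined
   by its genuine data). *)
Record GPath (X : UniformSpace) (x0 : X) : Type := {
  gp_end : X;
  gp_cls : (X -> X -> Prop) -> list X -> Prop;
  gp_junk : forall E, ~ entourage X E -> forall p, ~ gp_cls E p;
  gp_class : forall E, entourage X E ->
    exists c, is_epath E x0 gp_end c /\
      forall d, gp_cls E d <-> (is_epath E x0 gp_end d /\ ep_equiv E d c);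
  gp_compat : forall E F, entourage X E -> entourage X F -> subrel F E ->
    forall d, gp_cls F d -> gp_cls E d }.

Definition F_homotopic (X : Type) (F : X -> X -> Prop) (c d : list X) : Prop :=
  exists xc yc xd yd,
    is_epath F xc yc c /\ is_epath F xd yd d /\ F xc xd /\ F yc yd /\
    ep_equiv F c (xc :: d ++ [yc]).

Definition Fstar (X : UniformSpace) (x0 : X) (F : X -> X -> Prop)
    (c d : GPath X x0) : Prop :=
  exists pc pd, gp_cls c F pc /\ gp_cls d F pd /\ F_homotopic F pc pd.

Definition GP (X : UniformSpace) (x0 : X) : UniformSpace := {|
  carrier := GPath X x0;
  entourage := fun R => exists F, entourage X F /\ subrel (Fstar F) R |}.

Definition E_short (X : UniformSpace) (E : X -> X -> Prop) (x y : X)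
    (c : GPath X x) : Prop :=
  gp_end c = y /\ E x y /\ gp_cls c E [x; y].

Definition uniformly_joinable (X : UniformSpace) : Prop :=
  forall E, entourage X E -> exists F, entourage X F /\
    forall x y, F x y -> exists c : GPath X x, @E_short X E x y c.

Definition is_constant_gpath (X : UniformSpace) (x0 : X) (y0 : GPath X x0)
  : Prop :=
  gp_end y0 = x0 /\ forall E, entourage X E -> gp_cls y0 E [x0].

(* Main.v *)
Require Import Defs.
From Stdlib Require Import List Relations ClassicalEpsilon.
Import ListNotations.
Set Implicit Arguments.

Ltac s3 := unfold Rsimplex3; split; [|split].

Section Gen.
Variable T : Type.
Implicit Types E F : T -> T -> Prop.

Lemma last_app_cons (l1 l2 : list T) (x d : T) :
  last (l1 ++ x :: l2) d = last (x :: l2) d.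
Proof.
  induction l1 as [|a l1 IH]; simpl; auto.
  rewrite IH. destruct l1; simpl; auto.
Qed.

Lemma last_cons_cons (a b : T) l d : last (a :: b :: l) d = last (b :: l) d.
Proof. reflexivity. Qed.

Lemma ep_step_ctx E a b l l' : ep_step E l l' -> ep_step E (a ++ l ++ b) (a ++ l' ++ b).
Proof.
  intros H; destruct H.
  - replace (a ++ (l1 ++ u :: u :: l2) ++ b) with ((a ++ l1) ++ u :: u :: (l2 ++ b))
      by (repeat rewrite <- app_assoc; reflexivity).
    replace (a ++ (l1 ++ u :: l2) ++ b) with ((a ++ l1) ++ u :: (l2 ++ b))
      by (repeat rewrite <- app_assoc; reflexivity).
    constructor.
  - replace (a ++ (l1 ++ u :: v :: w :: l2) ++ b) with ((a ++ l1) ++ u :: v :: w :: (l2 ++ b))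
      by (repeat rewrite <- app_assoc; reflexivity).
    replace (a ++ (l1 ++ u :: w :: l2) ++ b) with ((a ++ l1) ++ u :: w :: (l2 ++ b))
      by (repeat rewrite <- app_assoc; reflexivity).
    constructor; auto.
Qed.

Lemma eq_refl' E l : ep_equiv E l l.
Proof. apply rst_refl. Qed.
Lemma eq_sym' E l l' : ep_equiv E l l' -> ep_equiv E l' l.
Proof. apply rst_sym. Qed.
Lemma eq_trans' E l1 l2 l3 : ep_equiv E l1 l2 -> ep_equiv E l2 l3 -> ep_equiv E l1 l3.
Proof. apply rst_trans. Qed.

Lemma eq_ctx E a b l l' : ep_equiv E l l' -> ep_equiv E (a ++ l ++ b) (a ++ l' ++ b).
Proof.
  intros H; induction H.
  - apply rst_step, ep_step_ctx; auto.
  - apply rst_refl.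
  - apply rst_sym; auto.
  - eapply rst_trans; eauto.
Qed.

Lemma eq_ctxl E a l l' : ep_equiv E l l' -> ep_equiv E (a ++ l) (a ++ l').
Proof. intros H. pose proof (eq_ctx a [] H). rewrite !app_nil_r in H0. auto. Qed.
Lemma eq_ctxr E b l l' : ep_equiv E l l' -> ep_equiv E (l ++ b) (l' ++ b).
Proof. intros H. apply (eq_ctx [] b H). Qed.

Lemma eq_dup E a u b : ep_equiv E (a ++ u :: u :: b) (a ++ u :: b).
Proof. apply rst_step; constructor. Qed.
Lemma eq_tri E a u v w b : Rsimplex3 E u v w ->
  ep_equiv E (a ++ u :: v :: w :: b) (a ++ u :: w :: b).
Proof. intros; apply rst_step; constructor; auto. Qed.

Lemma Redge_sym E a b : Redge E a b -> Redge E b a.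
Proof. unfold Redge; tauto. Qed.
Lemma Redge_refl E a b : Redge E a b -> Redge E a a.
Proof. unfold Redge; tauto. Qed.
Lemma Redge_mono E F a b : subrel E F -> Redge E a b -> Redge F a b.
Proof. unfold Redge, subrel; intuition. Qed.

Lemma eq_mono E F l l' : subrel E F -> ep_equiv E l l' -> ep_equiv F l l'.
Proof.
  intros S H; induction H.
  - apply rst_step. destruct H.
    + constructor.
    + constructor. destruct H as (?&?&?). s3; eapply Redge_mono; eauto.
  - apply rst_refl.
  - apply rst_sym; auto.
  - eapply rst_trans; eauto.
Qed.

Lemma eq_rev E l l' : ep_equiv E l l' -> ep_equiv E (rev l) (rev l').
Proof.
  intros H; induction H.
  - destruct H.
    + rewrite !rev_app_distr. simpl. rewrite <- !app_assoc. simpl.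
      apply (eq_dup _ (rev l2) u (rev l1)).
    + rewrite !rev_app_distr. simpl. rewrite <- !app_assoc. simpl.
      apply (@eq_tri E (rev l2) w v u (rev l1)).
      destruct H as (?&?&?). s3; apply Redge_sym; auto.
  - apply rst_refl.
  - apply rst_sym; auto.
  - eapply rst_trans; eauto.
Qed.

Lemma step_ends E l l' : ep_step E l l' -> hd_error l = hd_error l' /\ forall d, last l d = last l' d.
Proof.
  intros H; destruct H; split; try (destruct l1; reflexivity); intros d.
  - rewrite !last_app_cons. destruct l2; reflexivity.
  - rewrite !last_app_cons. destruct l2; reflexivity.
Qed.

Lemma eq_ends E l l' : ep_equiv E l l' -> hd_error l = hd_error l' /\ forall d, last l d = last l' d.
Proof.
  intros H; induction H.
  - eapply step_ends; eauto.
  - auto.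
  - destruct IHclos_refl_sym_trans as [A B]; split; auto.
  - destruct IHclos_refl_sym_trans1 as [A B], IHclos_refl_sym_trans2 as [C D]; split.
    congruence. intros; rewrite B, D; auto.
Qed.

Lemma echain_app E l1 x l2 :
  echain E (l1 ++ x :: l2) <-> echain E (l1 ++ [x]) /\ echain E (x :: l2).
Proof.
  induction l1 as [|a l1 IH]; simpl.
  - destruct l2; simpl; tauto.
  - destruct l1 as [|b l1]; simpl in *.
    + destruct l2; simpl; tauto.
    + rewrite IH. tauto.
Qed.

Lemma echain_rev E l : echain E l -> echain E (rev l).
Proof.
  induction l as [|a l IH]; simpl; auto.
  destruct l as [|b l]; simpl; auto.
  intros [H1 H2]. simpl in IH. specialize (IH H2).
  change (echain E ((rev l ++ [b]) ++ [a])).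
  rewrite <- app_assoc. simpl.
  apply echain_app. split; auto. simpl. split; auto. apply Redge_sym; auto.
Qed.

Lemma echain_mono E F l : subrel E F -> echain E l -> echain F l.
Proof.
  intros S. induction l as [|a l IH]; simpl; auto.
  destruct l; auto. intros [H1 H2]; split; auto. eapply Redge_mono; eauto.
Qed.

Lemma backtrack E a v m c b :
  echain E (v :: m ++ [c]) ->
  ep_equiv E (a ++ v :: m ++ c :: rev m ++ v :: b) (a ++ v :: b).
Proof.
  revert a v b. induction m as [|w m IH]; intros a v b H; simpl in *.
  - destruct H as [H _].
    eapply eq_trans'. apply eq_tri. s3; eauto using Redge_sym, Redge_refl.
    apply eq_dup.
  - destruct H as [Hvw H].
    rewrite <- app_assoc. simpl.
    eapply eq_trans'.
    { replace (a ++ v :: w :: m ++ c :: rev m ++ w :: v :: b)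
        with ((a ++ [v]) ++ w :: m ++ c :: rev m ++ w :: (v :: b))
        by (rewrite <- app_assoc; reflexivity).
      apply IH. auto. }
    rewrite <- app_assoc. simpl.
    eapply eq_trans'. apply eq_tri. s3; eauto using Redge_sym, Redge_refl.
    apply eq_dup.
Qed.

Definition all4 E (a b c d : T) := Redge E a b /\ Redge E a c /\ Redge E a d /\
  Redge E b c /\ Redge E b d /\ Redge E c d.

Fixpoint Lad E (xp yp : T) (zs : list (T * T)) : Prop :=
  match zs with
  | [] => True
  | (x, y) :: rest => all4 E xp yp x y /\ Lad E x y rest
  end.

Lemma ladder E zs : forall a xp yp b, Lad E xp yp zs ->
  ep_equiv E (a ++ xp :: map fst zs ++ rev (map snd zs) ++ yp :: b) (a ++ xp :: yp :: b).
Proof.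
  induction zs as [|[x y] zs IH]; intros a xp yp b H; simpl in *.
  - apply eq_refl'.
  - destruct H as [H4 H].
    rewrite <- !app_assoc. simpl.
    eapply eq_trans'.
    { replace (a ++ xp :: x :: map fst zs ++ rev (map snd zs) ++ y :: yp :: b)
        with ((a ++ [xp]) ++ x :: map fst zs ++ rev (map snd zs) ++ y :: (yp :: b))
        by (rewrite <- app_assoc; reflexivity).
      apply IH; auto. }
    rewrite <- app_assoc. simpl.
    destruct H4 as (H1&H2&H3&H5&H6&H7).
    eapply eq_trans'. apply eq_tri. s3; eauto using Redge_sym.
    apply eq_tri. s3; eauto using Redge_sym.
Qed.

End Gen.
Unset Implicit Arguments.

Lemma snoc_decomp {T} (l : list T) (d : T) : l <> [] -> exists m, l = m ++ [last l d].
Proof. intros H. exists (removelast l). apply app_removelast_last; auto. Qed.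

Lemma concat_equiv {T} (E : T -> T -> Prop) p p' q q' z :
  ep_equiv E p p' -> ep_equiv E (z :: q) (z :: q') -> p <> [] -> last p z = z ->
  ep_equiv E (p ++ q) (p' ++ q').
Proof.
  intros H1 H2 Hp Hl.
  eapply eq_trans'. apply eq_ctxr; eauto.
  destruct (eq_ends H1) as [Hh Hla].
  assert (p' <> []) by (destruct p, p'; simpl in *; congruence).
  destruct (snoc_decomp p' z H) as [m Hm]. rewrite <- Hla, Hl in Hm. rewrite Hm.
  rewrite <- !app_assoc. simpl. apply eq_ctxl. auto.
Qed.

Lemma join_epath {T} (E : T -> T -> Prop) p q a b :
  hd_error p = Some a -> last p a = b -> echain E p -> echain E (b :: q) ->
  hd_error (p ++ q) = Some a /\ (forall d, last (p ++ q) d = last (b :: q) d) /\ echain E (p ++ q).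
Proof.
  intros H1 H2 H3 H4.
  assert (p <> []) by (destruct p; simpl in *; congruence).
  destruct (snoc_decomp p a H) as [m Hm]. rewrite H2 in Hm. subst p.
  rewrite <- app_assoc in *. simpl in *. split; [|split].
  - destruct m; simpl in *; auto.
  - intros d. apply last_app_cons.
  - apply echain_app. split; auto.
Qed.

Fixpoint pre {T} (l : list T) : list (list T) :=
  match l with
  | [] => []
  | a :: t => [a] :: map (cons a) (pre t)
  end.

Lemma pre_app {T} (l1 r : list T) : pre (l1 ++ r) = pre l1 ++ map (app l1) (pre r).
Proof.
  induction l1 as [|a l1 IH]; simpl.
  - symmetry. apply map_id.
  - rewrite IH, map_app, map_map. reflexivity.
Qed.

Lemma pre_snoc {T} (w : list T) a : pre (w ++ [a]) = pre w ++ [w ++ [a]].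
Proof. rewrite pre_app. reflexivity. Qed.

Lemma pre_In {T} (w q : list T) : In q (pre w) -> exists r, w = q ++ r /\ q <> [].
Proof.
  revert q. induction w as [|a t IH]; simpl; intros q H; [contradiction|].
  destruct H as [<-|H].
  - exists t. split; auto. discriminate.
  - apply in_map_iff in H. destruct H as (q'&<-&H). destruct (IH q' H) as (r&->&_).
    exists r. split; auto. discriminate.
Qed.

Lemma pre_last {T} (w : list T) : w <> [] -> exists P, pre w = P ++ [w].
Proof.
  induction w as [|a w IH] using rev_ind; intros H; [congruence|].
  rewrite pre_snoc. eauto.
Qed.

Lemma pre_cons_last {T} (x : T) t : t <> [] -> exists m, pre (x :: t) = [x] :: m ++ [x :: t].
Proof.
  intros H. destruct (pre_last t H) as [P HP]. simpl. rewrite HP, map_app. simpl. eauto.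
Qed.

Lemma eq_map {T U} (E : T -> T -> Prop) (E' : U -> U -> Prop) (f : T -> U) l l' :
  (forall a b, Redge E a b -> Redge E' (f a) (f b)) ->
  ep_equiv E l l' -> ep_equiv E' (map f l) (map f l').
Proof.
  intros Hf H. induction H.
  - destruct H; rewrite !map_app; simpl.
    + apply eq_dup.
    + apply eq_tri. destruct H as (A&B&C). s3; auto.
  - apply eq_refl'.
  - apply eq_sym'; auto.
  - eapply eq_trans'; eauto.
Qed.

Lemma swap {T} (E : T -> T -> Prop) K B C Z j :
  hd_error B = Some j -> echain E B -> ep_equiv E (B ++ rev C) [j] ->
  ep_equiv E (K ++ [last B j] ++ rev C ++ Z) (K ++ rev B ++ Z).
Proof.
  intros Hh Hc HN.
  destruct B as [|j' Bt]; simpl in Hh; [discriminate|]. injection Hh as ->.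
  assert (A : ep_equiv E (K ++ rev Bt ++ j :: Bt ++ rev C ++ Z) (K ++ rev Bt ++ j :: Z)).
  { pose proof (eq_ctx (K ++ rev Bt) Z HN) as A. rewrite <- !app_assoc in A. simpl in A.
    repeat rewrite <- app_assoc in A. exact A. }
  simpl rev. rewrite <- !app_assoc. simpl.
  eapply eq_trans'; [|apply A].
  destruct Bt as [|b Bt'] using rev_ind.
  - simpl. apply eq_refl'.
  - clear IHBt'.
    assert (Hl : last (j :: Bt' ++ [b]) j = b) by (rewrite app_comm_cons; apply last_last).
    change (match Bt' ++ [b] with [] => j | _ :: _ => last (Bt' ++ [b]) j end) with (last (j :: Bt' ++ [b]) j). rewrite Hl.
    rewrite rev_app_distr. simpl. rewrite <- app_assoc. simpl.
    apply eq_sym'.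
    pose proof (backtrack E K b (rev Bt') j (rev C ++ Z)) as Bk.
    rewrite rev_involutive in Bk. apply Bk.
    apply echain_rev in Hc. simpl in Hc. rewrite rev_app_distr in Hc. simpl in Hc.
    exact Hc.
Qed.

Ltac a6 := unfold all4; split; [|split; [|split; [|split; [|split]]]].

Section Main.
Variable X : UniformSpace.
Variable x0 : X.
Variable y0 : GPath X x0.
Hypothesis Hy0 : is_constant_gpath y0.
Hypothesis HU : is_uniform X.
Variable F : X -> X -> Prop.
Hypothesis HF : entourage X F.
Variable G1 : X -> X -> Prop.
Hypothesis Hjoin : forall x y, G1 x y -> exists c : GPath X x, @E_short X F x y c.
Variable G : X -> X -> Prop.
Hypothesis HG : entourage X G.
Hypothesis HG1 : subrel G G1.
Hypothesis HGF : subrel G F.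
Hypothesis HGsym : forall a b, G a b -> G b a.
Implicit Types E : X -> X -> Prop.
Implicit Types p q w : list X.
Implicit Types a b x : X.

Lemma ent_refl E : entourage X E -> forall x, E x x.
Proof. destruct HU as (_&H&_). intros; apply H; auto. Qed.

Lemma epath_mono E (E' : X -> X -> Prop) a b p : subrel E E' -> is_epath E a b p -> is_epath E' a b p.
Proof. intros S (?&?&?). repeat split; auto. eapply echain_mono; eauto. Qed.

Lemma cls_epath x (c : GPath X x) E p : entourage X E -> gp_cls c E p -> is_epath E x (gp_end c) p.
Proof. intros HE H. destruct (gp_class c E HE) as (c0&_&Hc). apply Hc in H. tauto. Qed.

Lemma cls_equiv x (c : GPath X x) E p q : entourage X E -> gp_cls c E p -> gp_cls c E q -> ep_equiv E p q.
Proof.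
  intros HE H1 H2. destruct (gp_class c E HE) as (c0&_&Hc).
  apply Hc in H1. apply Hc in H2. eapply eq_trans'. apply H1. apply eq_sym'. apply H2.
Qed.

Definition csh (a b : X) : option (GPath X a) :=
  match excluded_middle_informative (exists c : GPath X a, @E_short X F a b c) with
  | left H => Some (proj1_sig (constructive_indefinite_description _ H))
  | right _ => None
  end.

Definition sh (a b : X) (E : X -> X -> Prop) : list X :=
  match csh a b with
  | Some c => match excluded_middle_informative (exists p, gp_cls c E p) with
              | left H => proj1_sig (constructive_indefinite_description _ H)
              | right _ => [a; b] end
  | None => [a; b]
  end.

Lemma sh_spec a b : G1 a b -> exists c : GPath X a, @E_short X F a b c /\
  forall E, entourage X E -> gp_cls c E (sh a b E).
Proof.
  intros Hab. unfold sh, csh.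
  destruct (excluded_middle_informative _) as [H|H].
  2:{ exfalso. apply H. apply Hjoin; auto. }
  destruct (constructive_indefinite_description _ H) as [c Hc]. simpl.
  exists c. split; auto. intros E HE.
  destruct (excluded_middle_informative _) as [H2|H2].
  - destruct (constructive_indefinite_description _ H2) as [p Hp]; simpl; auto.
  - exfalso. apply H2. destruct (gp_class c E HE) as (c0&Hc0&Hcc). exists c0. apply Hcc.
    split; auto. apply eq_refl'.
Qed.

Lemma sh_epath a b E : G1 a b -> entourage X E -> is_epath E a b (sh a b E).
Proof.
  intros Hab HE. destruct (sh_spec a b Hab) as (c&(He&_&_)&Hc).
  assert (K : is_epath E a (gp_end c) (sh a b E)) by (apply cls_epath; auto). rewrite He in K. exact K.
Qed.

Lemma sh_compat a b E (E' : X -> X -> Prop) : G1 a b -> entourage X E -> entourage X E' -> subrel E' E ->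
  ep_equiv E (sh a b E') (sh a b E).
Proof.
  intros Hab HE HE' S. destruct (sh_spec a b Hab) as (c&_&Hc).
  eapply cls_equiv; [exact HE| eapply gp_compat; eauto | auto].
Qed.

Lemma sh_F a b : G1 a b -> ep_equiv F (sh a b F) [a; b].
Proof.
  intros Hab. destruct (sh_spec a b Hab) as (c&(He&_&Hs)&Hc).
  eapply cls_equiv; [exact HF| auto | auto].
Qed.

Fixpoint rep (E : X -> X -> Prop) (w : list X) : list X :=
  match w with
  | [] => []
  | a :: t => match t with
              | [] => [a]
              | b :: _ => sh a b E ++ tl (rep E t)
              end
  end.

Lemma rep_props E w : entourage X E -> echain G1 w -> w <> [] ->
  hd_error (rep E w) = hd_error w /\ (forall d, last (rep E w) d = last w d) /\ echain E (rep E w).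
Proof.
  intros HE. induction w as [|a t IH]; intros Hc Hn; [congruence|].
  destruct t as [|b t]; [simpl; auto|].
  destruct Hc as [Hab Hc].
  destruct (IH Hc ltac:(discriminate)) as (H1&H2&H3).
  change (rep E (a :: b :: t)) with (sh a b E ++ tl (rep E (b :: t))).
  destruct (rep E (b :: t)) as [|b' q] eqn:Hr; simpl in H1; [discriminate|].
  injection H1 as ->. simpl.
  destruct (sh_epath a b E (proj1 (proj2 Hab)) HE) as (S1&S2&S3).
  destruct (join_epath E (sh a b E) q a b S1 S2 S3 H3) as (J1&J2&J3).
  split; [|split]; auto.
  intros d. rewrite J2. rewrite H2. reflexivity.
Qed.

Lemma last_default {T} (l : list T) d d' : l <> [] -> last l d = last l d'.
Proof.
  induction l as [|a l IH]; intros H; [congruence|].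
  destruct l; simpl; auto. apply IH. discriminate.
Qed.

Lemma rep_cons E b t : entourage X E -> echain G1 (b :: t) -> exists q, rep E (b :: t) = b :: q.
Proof.
  intros HE Hc. destruct (rep_props E (b :: t) HE Hc ltac:(discriminate)) as (H1&_&_).
  destruct (rep E (b :: t)) as [|b' q]; simpl in H1; [discriminate|].
  injection H1 as ->. eauto.
Qed.

Lemma rep_compat E E' w : entourage X E -> entourage X E' -> subrel E' E ->
  echain G1 w -> w <> [] -> ep_equiv E (rep E' w) (rep E w).
Proof.
  intros HE HE' S. induction w as [|a t IH]; intros Hc Hn; [congruence|].
  destruct t as [|b t]; [apply eq_refl'|].
  destruct Hc as [Hab Hc].
  specialize (IH Hc ltac:(discriminate)).
  change (rep E (a :: b :: t)) with (sh a b E ++ tl (rep E (b :: t))).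
  change (rep E' (a :: b :: t)) with (sh a b E' ++ tl (rep E' (b :: t))).
  destruct (rep_cons E b t HE Hc) as [q Hq]. destruct (rep_cons E' b t HE' Hc) as [q' Hq'].
  rewrite Hq, Hq' in *. simpl.
  destruct (sh_epath a b E' (proj1 (proj2 Hab)) HE') as (S1&S2&S3).
  apply (concat_equiv E _ _ _ _ b); auto.
  - apply sh_compat; auto. exact (proj1 (proj2 Hab)).
  - destruct (sh a b E'); simpl in S1; discriminate.
  - rewrite (last_default (sh a b E') b a); auto. destruct (sh a b E'); simpl in S1; discriminate.
Qed.

Lemma rep_F w : echain G1 w -> w <> [] -> ep_equiv F (rep F w) w.
Proof.
  induction w as [|a t IH]; intros Hc Hn; [congruence|].
  destruct t as [|b t]; [apply eq_refl'|].
  destruct Hc as [Hab Hc].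
  specialize (IH Hc ltac:(discriminate)).
  change (rep F (a :: b :: t)) with (sh a b F ++ tl (rep F (b :: t))).
  destruct (rep_cons F b t HF Hc) as [q Hq].
  rewrite Hq in *. simpl.
  destruct (sh_epath a b F (proj1 (proj2 Hab)) HF) as (S1&S2&S3).
  change (a :: b :: t) with ([a; b] ++ t).
  apply (concat_equiv F _ _ _ _ b); auto.
  - apply sh_F. exact (proj1 (proj2 Hab)).
  - destruct (sh a b F); simpl in S1; discriminate.
  - rewrite (last_default (sh a b F) b a); auto. destruct (sh a b F); simpl in S1; discriminate.
Qed.

Definition Gd w := hd_error w = Some x0 /\ echain G w.

Definition Jcls w E p := entourage X E /\ is_epath E x0 (last w x0) p /\ ep_equiv E p (rep E w).

Lemma Gd_ne w : Gd w -> w <> [].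
Proof. intros [H _]. destruct w; simpl in H; congruence. Qed.

Lemma Jjunk w : forall E, ~ entourage X E -> forall p, ~ Jcls w E p.
Proof. intros E HE p [H _]. auto. Qed.

Lemma Jclass w (H : Gd w) : forall E, entourage X E ->
  exists c, is_epath E x0 (last w x0) c /\
    forall d, Jcls w E d <-> (is_epath E x0 (last w x0) d /\ ep_equiv E d c).
Proof.
  intros E HE. exists (rep E w). split.
  - destruct H as [H1 H2].
    assert (Hc1 : echain G1 w) by (eapply echain_mono; eauto).
    destruct (rep_props E w HE Hc1) as (R1&R2&R3). { destruct w; simpl in H1; congruence. }
    split; [|split]; auto. congruence.
  - intros d. unfold Jcls. tauto.
Qed.

Lemma Jcompat w (H : Gd w) : forall E E', entourage X E -> entourage X E' -> subrel E' E ->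
  forall d, Jcls w E' d -> Jcls w E d.
Proof.
  intros E E' HE HE' S d (_&H1&H2). split; [auto|split].
  - eapply epath_mono; eauto.
  - eapply eq_trans'. eapply eq_mono; eauto.
    apply rep_compat; auto. eapply echain_mono; [|apply H]; auto. apply Gd_ne; auto.
Qed.

Definition Jg w (H : Gd w) : GPath X x0 :=
  {| gp_end := last w x0; gp_cls := Jcls w; gp_junk := Jjunk w;
     gp_class := Jclass w H; gp_compat := Jcompat w H |}.

Definition J w : GPath X x0 :=
  match excluded_middle_informative (Gd w) with
  | left H => Jg w H
  | right _ => y0
  end.

Lemma J_cls w : Gd w -> gp_cls (J w) F w /\ gp_end (J w) = last w x0.
Proof.
  intros H. unfold J. destruct (excluded_middle_informative (Gd w)) as [H'|H']; [|tauto].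
  simpl. split; auto. split; [auto|split].
  - destruct H as [H1 H2]. split; [auto|split; auto]. eapply echain_mono; eauto.
  - apply eq_sym'. apply rep_F. eapply echain_mono; [|apply H]; auto. apply Gd_ne; auto.
Qed.


Definition Close p q := F (last p x0) (last q x0) /\ ep_equiv F p (q ++ [last p x0]).

Lemma close_equiv p q : ep_equiv F p q -> q <> [] -> Close p q.
Proof.
  intros H Hq. destruct (eq_ends H) as [_ Hl]. split.
  - rewrite Hl. apply ent_refl; auto.
  - rewrite Hl. eapply eq_trans'; [apply H|].
    destruct (snoc_decomp q x0 Hq) as [m Hm]. rewrite Hm at 1 2.
    rewrite <- app_assoc. simpl.
    apply eq_sym'. apply (@eq_dup _ F m (last q x0) []).
Qed.

Lemma close_ext p t : p <> [] -> Redge F (last p x0) t -> Close p (p ++ [t]) /\ Close (p ++ [t]) p.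
Proof.
  intros Hp He. unfold Close. rewrite !last_last. split; split.
  - destruct He as (_&?&_); auto.
  - destruct (snoc_decomp p x0 Hp) as [m Hm]. rewrite Hm at 1 2. rewrite <- !app_assoc. simpl.
    apply eq_sym'. eapply eq_trans'.
    + apply (@eq_tri _ F m (last p x0) t (last p x0) []). s3; auto using Redge_sym.
      eapply Redge_refl; eauto.
    + apply eq_dup.
  - destruct He as (_&_&?&_); auto.
  - apply eq_refl'.
Qed.

Lemma close_resp p p' q q' : ep_equiv F p p' -> ep_equiv F q q' -> Close p q -> Close p' q'.
Proof.
  intros Hp Hq [H1 H2]. destruct (eq_ends Hp) as [_ Lp]. destruct (eq_ends Hq) as [_ Lq].
  split.
  - rewrite <- Lp, <- Lq; auto.
  - rewrite <- Lp. eapply eq_trans'; [apply eq_sym'; apply Hp|].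
    eapply eq_trans'; [apply H2|]. apply eq_ctxr; auto.
Qed.

Lemma step_chain l l' : ep_step G l l' -> (echain G l <-> echain G l').
Proof.
  intros H; destruct H.
  - rewrite (echain_app G l1 u (u :: l2)), (echain_app G l1 u l2). simpl.
    assert (Redge G u u) by (repeat split; apply ent_refl; auto). tauto.
  - rewrite (echain_app G l1 u (v :: w :: l2)), (echain_app G l1 u (w :: l2)). simpl.
    destruct H as (A&B&C). tauto.
Qed.

Lemma equiv_gd l l' : ep_equiv G l l' -> (Gd l <-> Gd l').
Proof.
  intros H. unfold Gd.
  assert (echain G l <-> echain G l').
  { clear -H HU HG. induction H.
    - apply step_chain; auto.
    - tauto.
    - tauto.
    - tauto. }
  destruct (eq_ends H) as [Hh _]. rewrite Hh. tauto.
Qed.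

Definition Jrel q q' := Gd q /\ Gd q' /\ Close q q'.

Lemma echain_prefix {T} (E : T -> T -> Prop) (l1 l2 : list T) : echain E (l1 ++ l2) -> echain E l1.
Proof.
  induction l1 as [|a l1 IH]; simpl; auto.
  destruct l1 as [|b l1]; simpl; auto. intros [H1 H2]; split; auto. apply IH. exact H2.
Qed.

Lemma Gd_prefix q r : Gd (q ++ r) -> q <> [] -> Gd q.
Proof.
  intros [H1 H2] Hq. split.
  - destruct q; [congruence|]. auto.
  - eapply echain_prefix; eauto.
Qed.

Lemma Gd_last_edge q t : Gd (q ++ [t]) -> q <> [] -> Redge G (last q x0) t.
Proof.
  intros [_ H] Hq. destruct (snoc_decomp q x0 Hq) as [m Hm]. rewrite Hm in H.
  rewrite <- app_assoc in H. simpl in H. apply echain_app in H. simpl in H. tauto.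
Qed.

Lemma near p q : Gd p -> Gd q ->
  ep_equiv G p q \/ (exists t, ep_equiv G p (q ++ [t])) \/ (exists t, ep_equiv G q (p ++ [t])) ->
  Redge Jrel p q.
Proof.
  intros Hp Hq H.
  assert (Pn := Gd_ne p Hp). assert (Qn := Gd_ne q Hq).
  assert (Cp : Close p p) by (apply close_equiv; auto; apply eq_refl').
  assert (Cq : Close q q) by (apply close_equiv; auto; apply eq_refl').
  unfold Redge, Jrel.
  destruct H as [H|[[t H]|[t H]]].
  - apply (@eq_mono _ G F _ _ HGF) in H.
    assert (Close p q) by (apply close_equiv; auto).
    assert (Close q p) by (apply close_equiv; auto; apply eq_sym'; auto).
    tauto.
  - assert (Gd (q ++ [t])) by exact (proj1 (equiv_gd _ _ H) Hp).
    assert (E1 := Gd_last_edge q t H0 Qn).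
    destruct (close_ext q t Qn (@Redge_mono _ G F _ _ HGF E1)) as [C1 C2].
    apply (@eq_mono _ G F _ _ HGF) in H.
    assert (Close p q) by (eapply close_resp; [apply eq_sym'; apply H| apply eq_refl' | auto]).
    assert (Close q p) by (eapply close_resp; [apply eq_refl'| apply eq_sym'; apply H | auto]).
    tauto.
  - assert (Gd (p ++ [t])) by exact (proj1 (equiv_gd _ _ H) Hq).
    assert (E1 := Gd_last_edge p t H0 Pn).
    destruct (close_ext p t Pn (@Redge_mono _ G F _ _ HGF E1)) as [C1 C2].
    apply (@eq_mono _ G F _ _ HGF) in H.
    assert (Close q p) by (eapply close_resp; [apply eq_sym'; apply H| apply eq_refl' | auto]).
    assert (Close p q) by (eapply close_resp; [apply eq_refl'| apply eq_sym'; apply H | auto]).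
    tauto.
Qed.


Lemma Gd_pre w q : Gd w -> In q (pre w) -> Gd q.
Proof. intros H Hq. destruct (pre_In w q Hq) as (r&->&Hn). eapply Gd_prefix; eauto. Qed.

Lemma Gd_hd w : Gd w -> exists t, w = x0 :: t.
Proof. intros [H _]. destruct w; simpl in H; inversion H; eauto. Qed.

Lemma near_ext q t : Gd (q ++ [t]) -> q <> [] -> Redge Jrel q (q ++ [t]).
Proof.
  intros H Hq. apply near; auto. eapply Gd_prefix; eauto.
  right; right. exists t. apply eq_refl'.
Qed.

Lemma pre_chain w : Gd w -> echain Jrel (pre w).
Proof.
  induction w as [|a w IH] using rev_ind; intros H; simpl; auto.
  destruct w as [|b w'] eqn:Ew.
  - simpl. auto.
  - rewrite <- Ew in *. assert (Hn : w <> []) by (subst; discriminate).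
    rewrite pre_snoc. destruct (pre_last w Hn) as [P HP]. rewrite HP.
    rewrite <- app_assoc. simpl. apply echain_app. split.
    + rewrite <- HP. apply IH. eapply Gd_prefix; eauto.
    + simpl. split; auto. apply near_ext; auto.
Qed.

Definition NL u v := ep_equiv Jrel (pre u ++ rev (pre v)) [[x0]].

Lemma NL_refl u : Gd u -> NL u u.
Proof.
  intros H. unfold NL. destruct (Gd_hd u H) as [t ->].
  destruct t as [|y t].
  - simpl. apply (@eq_dup _ Jrel [] [x0] []).
  - destruct (pre_cons_last x0 (y :: t) ltac:(discriminate)) as [m Hm]. rewrite Hm.
    set (u := x0 :: y :: t) in *.
    replace (([x0] :: m ++ [u]) ++ rev ([x0] :: m ++ [u])) with
      ([x0] :: m ++ u :: u :: rev m ++ [[x0]])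
      by (simpl; rewrite rev_app_distr; simpl; rewrite <- !app_assoc; reflexivity).
    eapply eq_trans'.
    { apply (@eq_dup _ Jrel ([x0] :: m) u). }
    pose proof (backtrack Jrel [] [x0] m u [] ) as B. simpl in B.
    apply B.
    assert (Hc := pre_chain _ H). rewrite Hm in Hc. simpl in Hc |- *. exact Hc.
Qed.

Lemma NL_sym u v : NL u v -> NL v u.
Proof.
  unfold NL. intros H. apply eq_rev in H. rewrite rev_app_distr, rev_involutive in H. exact H.
Qed.

Lemma NL_trans u v w : Gd u -> Gd v -> Gd w -> Rsimplex3 Jrel u v w -> NL u v -> NL v w -> NL u w.
Proof.
  intros Hu Hv Hw H3 N1 N2. unfold NL in *.
  destruct (pre_last u (Gd_ne u Hu)) as [Pu Eu].
  destruct (pre_last v (Gd_ne v Hv)) as [Pv Ev].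
  destruct (pre_last w (Gd_ne w Hw)) as [Pw Ew].
  assert (Hh : hd_error (pre v) = Some [x0]).
  { destruct (Gd_hd v Hv) as [t ->]. reflexivity. }
  pose proof (swap Jrel (pre u) (pre v) (pre w) [] [x0] Hh (pre_chain v Hv) N2) as S.
  rewrite !app_nil_r in S. assert (Lv : last (pre v) [x0] = v) by (rewrite Ev; apply last_last). rewrite Lv in S.
  eapply eq_trans'; [|eapply eq_trans'; [apply S| exact N1]].
  rewrite Eu, Ew. rewrite rev_app_distr. simpl. rewrite <- !app_assoc. simpl.
  apply eq_sym'. apply eq_tri. exact H3.
Qed.

Lemma first_rung (l : list X) (t : X) : Gd l -> Gd (l ++ [t]) -> all4 Jrel l l (l ++ [t]) l.
Proof.
  intros Ha Hat. assert (Hn := Gd_ne l Ha).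
  assert (Raa : Redge Jrel l l) by (apply near; auto; left; apply eq_refl').
  assert (Rat := near_ext l t Hat Hn).
  unfold all4; split; [|split; [|split; [|split; [|split]]]]; auto; apply Redge_sym; auto.
Qed.

Lemma square (A B : list X) t : Gd A -> Gd B -> Gd (A ++ [t]) -> Gd (B ++ [t]) -> ep_equiv G A B ->
  all4 Jrel A B (A ++ [t]) (B ++ [t]).
Proof.
  intros HA HB HAt HBt H.
  a6.
  - apply near; auto.
  - apply near_ext; auto. apply Gd_ne; auto.
  - apply near; auto. right; right. exists t. apply eq_ctxr. apply eq_sym'; auto.
  - apply near; auto. right; right. exists t. apply eq_ctxr. auto.
  - apply near_ext; auto. apply Gd_ne; auto.
  - apply near; auto. left. apply eq_ctxr. auto.
Qed.

Lemma Lad_sq l2 : forall A B, ep_equiv G A B -> Gd (A ++ l2) -> Gd (B ++ l2) -> A <> [] -> B <> [] ->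
  Lad Jrel A B (map (fun s => (A ++ s, B ++ s)) (pre l2)).
Proof.
  induction l2 as [|t l2 IH]; intros A B H HA HB An Bn; simpl; auto.
  rewrite map_map. split.
  - apply square; auto.
    + eapply Gd_prefix; eauto.
    + eapply Gd_prefix; eauto.
    + eapply (Gd_prefix _ l2). rewrite <- app_assoc. exact HA. intros C; destruct A; discriminate.
    + eapply (Gd_prefix _ l2). rewrite <- app_assoc. exact HB. intros C; destruct B; discriminate.
  - rewrite (map_ext (fun (s : list X) => (A ++ t :: s, B ++ t :: s)) (fun s => ((A ++ [t]) ++ s, (B ++ [t]) ++ s))).
    + apply IH.
      * apply eq_ctxr; auto.
      * rewrite <- app_assoc. exact HA.
      * rewrite <- app_assoc. exact HB.
      * intros C; destruct A; discriminate.
      * intros C; destruct B; discriminate.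
    + intros s. rewrite <- !app_assoc. reflexivity.
Qed.

Lemma NL_ladder (l : list X) w w' Xs Ys zs : Gd l -> pre w = pre l ++ Xs -> pre w' = pre l ++ Ys ->
  Lad Jrel l l zs -> map fst zs = Xs -> map snd zs = l :: Ys -> NL w w'.
Proof.
  intros Hl Hw Hw' HL H1 H2. unfold NL. rewrite Hw, Hw'.
  destruct (pre_last l (Gd_ne l Hl)) as [P HP].
  assert (NR := NL_refl l Hl). unfold NL in NR. rewrite HP in *.
  replace (((P ++ [l]) ++ Xs) ++ rev ((P ++ [l]) ++ Ys)) with ((P ++ l :: Xs ++ rev Ys) ++ l :: rev P)
    by (rewrite !rev_app_distr; simpl; repeat (rewrite <- !app_assoc; simpl); reflexivity).
  eapply eq_trans'. { apply eq_sym'. apply eq_dup. }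
  rewrite <- app_assoc. simpl. rewrite <- app_assoc. simpl.
  pose proof (ladder Jrel zs P l l (rev P) HL) as LD.
  rewrite H1, H2 in LD. simpl in LD. rewrite <- app_assoc in LD. simpl in LD.
  eapply eq_trans'. { exact LD. }
  replace (P ++ l :: l :: rev P) with ((P ++ [l]) ++ rev (P ++ [l])); auto.
  rewrite rev_app_distr. simpl. rewrite <- app_assoc. reflexivity.
Qed.

Lemma NL_dup l1 u l2 : Gd (l1 ++ u :: u :: l2) -> NL (l1 ++ u :: u :: l2) (l1 ++ u :: l2).
Proof.
  intros Hw.
  assert (Hw' : Gd (l1 ++ u :: l2)).
  { apply (proj1 (equiv_gd _ _ (rst_step _ _ _ _ (ep_dup G l1 u l2)))). auto. }
  assert (Ew : l1 ++ u :: u :: l2 = (l1 ++ [u]) ++ u :: l2) by (rewrite <- app_assoc; reflexivity).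
  assert (Ew' : l1 ++ u :: l2 = (l1 ++ [u]) ++ l2) by (rewrite <- app_assoc; reflexivity).
  set (a := l1 ++ [u]) in *.
  assert (Ha : Gd a) by (rewrite Ew in Hw; eapply Gd_prefix; eauto; unfold a; destruct l1; discriminate).
  apply (NL_ladder a _ _ (map (app a) (pre (u :: l2))) (map (app a) (pre l2))
    ((a ++ [u], a) :: map (fun s => ((a ++ [u]) ++ s, a ++ s)) (pre l2))); auto.
  - rewrite Ew. apply pre_app.
  - rewrite Ew'. apply pre_app.
  - simpl. split.
    + apply first_rung; auto. rewrite Ew in Hw. eapply (Gd_prefix _ l2). rewrite <- app_assoc. exact Hw.
      destruct a; discriminate.
    + apply Lad_sq.
      * unfold a. rewrite <- app_assoc. simpl. apply (rst_step _ _ _ _ (ep_dup G l1 u [])).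
      * rewrite <- app_assoc. simpl. rewrite <- Ew. auto.
      * rewrite <- Ew'. auto.
      * destruct a; discriminate.
      * unfold a; destruct l1; discriminate.
  - simpl. f_equal. rewrite !map_map. apply map_ext. intros s. rewrite <- app_assoc. reflexivity.
  - simpl. f_equal. rewrite map_map. reflexivity.
Qed.

Lemma NL_tri l1 u v x l2 : Rsimplex3 G u v x -> Gd (l1 ++ u :: v :: x :: l2) ->
  NL (l1 ++ u :: v :: x :: l2) (l1 ++ u :: x :: l2).
Proof.
  intros H3 Hw.
  assert (Hw' : Gd (l1 ++ u :: x :: l2)).
  { apply (proj1 (equiv_gd _ _ (rst_step _ _ _ _ (@ep_tri _ G l1 u v x l2 H3)))). auto. }
  assert (Ew : l1 ++ u :: v :: x :: l2 = (l1 ++ [u]) ++ v :: x :: l2) by (rewrite <- app_assoc; reflexivity).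
  assert (Ew' : l1 ++ u :: x :: l2 = (l1 ++ [u]) ++ x :: l2) by (rewrite <- app_assoc; reflexivity).
  assert (T1 : ep_equiv G (l1 ++ [u; v; x]) (l1 ++ [u; x])) by (apply eq_tri; auto).
  assert (T2 : ep_equiv G (l1 ++ [u; x; v]) (l1 ++ [u; v])).
  { apply eq_tri. destruct H3 as (A&B&C). s3; auto using Redge_sym. }
  set (a := l1 ++ [u]) in *.
  assert (an : a <> []) by (unfold a; destruct l1; discriminate).
  assert (Ga : Gd a) by (rewrite Ew in Hw; eapply Gd_prefix; eauto).
  assert (Gav : Gd (a ++ [v])).
  { rewrite Ew in Hw. eapply (Gd_prefix _ (x :: l2)). rewrite <- app_assoc. exact Hw.
    destruct a; discriminate. }
  assert (Gavx : Gd (a ++ [v; x])).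
  { rewrite Ew in Hw. eapply (Gd_prefix _ l2). rewrite <- app_assoc. exact Hw.
    destruct a; discriminate. }
  assert (Gax : Gd (a ++ [x])).
  { rewrite Ew' in Hw'. eapply (Gd_prefix _ l2). rewrite <- app_assoc. exact Hw'.
    destruct a; discriminate. }
  assert (Eavx : ep_equiv G (a ++ [v; x]) (a ++ [x])) by (unfold a; rewrite <- !app_assoc; exact T1).
  assert (Eav : ep_equiv G (a ++ [v]) ((a ++ [x]) ++ [v]))
    by (unfold a; rewrite <- !app_assoc; apply eq_sym'; exact T2).
  apply (NL_ladder a _ _ (map (app a) (pre (v :: x :: l2))) (map (app a) (pre (x :: l2)))
    ((a ++ [v], a) :: (a ++ [v; x], a ++ [x]) ::
       map (fun s => ((a ++ [v; x]) ++ s, (a ++ [x]) ++ s)) (pre l2))); auto.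
  - rewrite Ew. apply pre_app.
  - rewrite Ew'. apply pre_app.
  - simpl. split; [|split].
    + apply first_rung; auto.
    + a6.
      * apply Redge_sym. apply near_ext; auto.
      * replace (a ++ [v; x]) with ((a ++ [v]) ++ [x]) by (rewrite <- app_assoc; reflexivity).
        apply near_ext. rewrite <- app_assoc. exact Gavx. destruct a; discriminate.
      * apply near; auto. right; left. exists v. exact Eav.
      * apply near; auto. right; right. exists x. exact Eavx.
      * apply near_ext; auto.
      * apply near; auto.
    + apply Lad_sq; auto.
      * rewrite <- app_assoc. simpl. rewrite <- Ew. auto.
      * rewrite <- app_assoc. simpl. rewrite <- Ew'. auto.
      * destruct a; discriminate.
      * destruct a; discriminate.
  - simpl. f_equal. f_equal. rewrite !map_map. apply map_ext. intros s. simpl. rewrite <- !app_assoc. reflexivity.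
  - simpl. f_equal. f_equal. rewrite !map_map. apply map_ext. intros s. simpl. rewrite <- !app_assoc. reflexivity.
Qed.

Lemma hom_NL u v : ep_equiv G u v -> Gd u -> NL u v.
Proof.
  intros H. induction H as [x y Hs| x | x y Hxy IH | x y z Hxy IH1 Hyz IH2]; intros Hx.
  - destruct Hs.
    + apply NL_dup; auto.
    + apply NL_tri; auto.
  - apply NL_refl; auto.
  - apply NL_sym. apply IH. apply (proj2 (equiv_gd _ _ Hxy)). auto.
  - assert (Hy : Gd y) by exact (proj1 (equiv_gd _ _ Hxy) Hx).
    assert (Hz : Gd z) by exact (proj1 (equiv_gd _ _ Hyz) Hy).
    apply (NL_trans x y z); auto.
    s3; apply near; auto; left; auto. eapply eq_trans'; eauto.
Qed.

Variable R : GPath X x0 -> GPath X x0 -> Prop.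
Hypothesis HR : subrel (Fstar F) R.

Lemma close_Fstar (c d : GPath X x0) p q : gp_cls c F p -> gp_cls d F q -> Close p q -> Fstar F c d.
Proof.
  intros Hc Hd [C1 C2]. exists p, q. split; [auto|split; [auto|]].
  destruct (cls_epath x0 c F p HF Hc) as (P1&P2&P3).
  destruct (cls_epath x0 d F q HF Hd) as (Q1&Q2&Q3).
  exists x0, (gp_end c), x0, (gp_end d).
  split; [split; auto|]. split; [split; auto|].
  split; [apply ent_refl; auto|]. split; [rewrite <- P2, <- Q2; auto|].
  eapply eq_trans'; [apply C2|]. rewrite P2.
  destruct q as [|y q']; simpl in Q1; [discriminate|]. injection Q1 as ->.
  apply eq_sym'. apply (@eq_dup _ F [] x0 (q' ++ [gp_end c])).
Qed.

Lemma mixR (c d : GPath X x0) p q : gp_cls c F p -> gp_cls d F q -> Close p q -> R c d.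
Proof. intros. apply HR. eapply close_Fstar; eauto. Qed.

Lemma Redge_mix (c d : GPath X x0) p q : gp_cls c F p -> gp_cls d F q ->
  Close p p -> Close p q -> Close q p -> Close q q -> Redge R c d.
Proof. intros. repeat split; eapply mixR; eauto. Qed.

Lemma JR p q : Redge Jrel p q -> Redge R (J p) (J q).
Proof.
  intros ((Gp&_&Cpp)&(_&Gq&Cpq)&(_&_&Cqp)&(_&_&Cqq)).
  destruct (J_cls p Gp) as [Jp _]. destruct (J_cls q Gq) as [Jq _].
  eapply Redge_mix; eauto.
Qed.

Lemma NLJ u v : NL u v -> ep_equiv R (map J (pre u) ++ rev (map J (pre v))) [J [x0]].
Proof.
  intros H. unfold NL in H. apply (eq_map Jrel R J) in H; [|apply JR].
  rewrite map_app, map_rev in H. exact H.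
Qed.

Lemma chainJ u : Gd u -> echain R (map J (pre u)).
Proof.
  intros H. assert (C := pre_chain u H). clear H. revert C. generalize (pre u) as L.
  intros L C. induction L as [|a l IH]; simpl; auto.
  destruct l as [|b l]; simpl in *; auto. destruct C as [C1 C2]. split.
  - apply JR; auto.
  - apply IH; auto.
Qed.

Lemma FG_hom (c d : GPath X x0) p q : Fstar G c d -> gp_cls c G p -> gp_cls d G q ->
  ep_equiv G p (q ++ [gp_end c]) /\ G (gp_end c) (gp_end d).
Proof.
  intros (pc&pd&Hc&Hd&(xc&yc&xd&yd&E1&E2&Gx&Gy&EE)) Hp Hq.
  destruct (cls_epath x0 c G pc HG Hc) as (P1&P2&_).
  destruct (cls_epath x0 d G pd HG Hd) as (Q1&Q2&_).
  destruct (cls_epath x0 d G q HG Hq) as (R1&_&_).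
  destruct E1 as (E11&E12&_). destruct E2 as (E21&E22&_).
  rewrite P1 in E11. injection E11 as <-. rewrite Q1 in E21. injection E21 as <-.
  rewrite P2 in E12. rewrite Q2 in E22. subst yc yd.
  split; auto.
  eapply eq_trans'. { eapply cls_equiv; [exact HG| exact Hp| exact Hc]. }
  eapply eq_trans'. { exact EE. }
  destruct q as [|y q']; simpl in R1; [discriminate|]. injection R1 as ->.
  eapply eq_trans'. { apply (@eq_ctx _ G [x0] [gp_end c] pd (x0 :: q')).
    eapply cls_equiv; [exact HG| exact Hd| exact Hq]. }
  simpl. apply (@eq_dup _ G [] x0 (q' ++ [gp_end c])).
Qed.

Lemma clsG (c : GPath X x0) p : gp_cls c G p -> Gd p /\ last p x0 = gp_end c /\ gp_cls c F p.
Proof.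
  intros H. destruct (cls_epath x0 c G p HG H) as (A&B&C).
  split; [split; auto|split; auto]. eapply gp_compat; eauto.
Qed.

Lemma FG_close (c d : GPath X x0) p q : Fstar G c d -> gp_cls c G p -> gp_cls d G q -> Close p q.
Proof.
  intros H Hp Hq. destruct (FG_hom c d p q H Hp Hq) as [A B].
  destruct (clsG c p Hp) as (_&Lp&_). destruct (clsG d q Hq) as (_&Lq&_).
  split.
  - rewrite Lp, Lq. auto.
  - rewrite Lp. eapply eq_mono; eauto.
Qed.

Lemma close_self p : Gd p -> Close p p.
Proof. intros H. apply close_equiv. apply eq_refl'. apply Gd_ne; auto. Qed.

Lemma NL_pp (c c' : GPath X x0) p p' : Fstar G c c' -> gp_cls c G p -> gp_cls c' G p' -> NL p p'.
Proof.
  intros H Hp Hp'. destruct (FG_hom c c' p p' H Hp Hp') as [A _].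
  destruct (clsG c p Hp) as (Gp&_&_). destruct (clsG c' p' Hp') as (Gp'&_&_).
  set (z := gp_end c) in *.
  assert (Gz : Gd (p' ++ [z])) by exact (proj1 (equiv_gd _ _ A) Gp).
  assert (N := hom_NL p (p' ++ [z]) A Gp). unfold NL in *.
  rewrite pre_snoc in N.
  destruct (pre_last p (Gd_ne p Gp)) as [Pp Ep]. destruct (pre_last p' (Gd_ne p' Gp')) as [P' Ep'].
  rewrite Ep, Ep' in *. rewrite !rev_app_distr in *. simpl in *. rewrite <- !app_assoc in *. simpl in *.
  eapply eq_trans'; [|exact N].
  apply eq_sym'. apply eq_tri. s3.
  - apply near; auto.
  - apply Redge_sym. apply near_ext; auto. apply Gd_ne; auto.
  - apply near; auto. right; left. exists z. exact A.
Qed.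

Lemma tele l : l <> [] -> hd_error l = Some y0 -> echain (Fstar G) l ->
  exists p, gp_cls (last l y0) G p /\ ep_equiv R (l ++ rev (map J (pre p)) ++ [y0]) [y0].
Proof.
  induction l as [|c' l IH] using rev_ind; intros Hn Hh Hc; [congruence|].
  destruct (Hy0) as [Hy1 Hy2].
  assert (Gx0 : Gd [x0]) by (split; simpl; auto).
  assert (Cx0 : Close [x0] [x0]) by (apply close_self; auto).
  assert (Fx0 : gp_cls y0 F [x0]) by (apply Hy2; auto).
  assert (Jx0 : gp_cls (J [x0]) F [x0]) by (apply J_cls; auto).
  destruct l as [|c l0'] eqn:El.
  - simpl in Hh. injection Hh as ->. exists [x0]. split; [apply Hy2; auto|].
    simpl.
    assert (Ry : Redge R y0 (J [x0])) by (eapply Redge_mix; eauto).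
    eapply eq_trans'. { apply (@eq_tri _ R [] y0 (J [x0]) y0 []). s3; auto using Redge_sym.
      eapply Redge_refl; eauto. }
    apply (@eq_dup _ R [] y0 []).
  - rewrite <- El in *. assert (Hln : l <> []) by (subst; discriminate).
    destruct (snoc_decomp l y0 Hln) as [l0 Hl0].
    set (c0 := last l y0) in *.
    assert (Hhl : hd_error l = Some y0) by (subst l; exact Hh).
    assert (Hcl : echain (Fstar G) l) by (eapply echain_prefix; eauto).
    assert (Ecc : Redge (Fstar G) c0 c').
    { rewrite Hl0 in Hc. rewrite <- app_assoc in Hc. simpl in Hc.
      apply echain_app in Hc. destruct Hc as [_ Hc]. simpl in Hc. tauto. }
    destruct (IH Hln Hhl Hcl) as (p&Hp&HI).
    destruct (gp_class c' G HG) as (p'&Hp'&Hcp'). assert (Hp'c : gp_cls c' G p') by (apply Hcp'; split; auto; apply eq_refl').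
    clear Hcp' Hp'.
    destruct Ecc as (_&F1&F2&_).
    assert (N := NL_pp c0 c' p p' F1 Hp Hp'c).
    assert (NJ := NLJ p p' N).
    destruct (clsG c0 p Hp) as (Gp&_&Fp). destruct (clsG c' p' Hp'c) as (Gp'&_&Fp').
    destruct (J_cls p Gp) as [Jp _]. destruct (J_cls p' Gp') as [Jp' _].
    assert (C12 := FG_close _ _ _ _ F1 Hp Hp'c). assert (C21 := FG_close _ _ _ _ F2 Hp'c Hp).
    assert (C11 := close_self p Gp). assert (C22 := close_self p' Gp').
    exists p'. split. { rewrite last_last. auto. }
    destruct (pre_last p (Gd_ne p Gp)) as [Pp Ep]. destruct (pre_last p' (Gd_ne p' Gp')) as [P' Ep'].
    assert (Hsw := swap R l (map J (pre p)) (map J (pre p')) [y0] (J [x0])).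
    assert (Hhd : hd_error (map J (pre p)) = Some (J [x0])).
    { destruct (Gd_hd p Gp) as [t ->]. reflexivity. }
    specialize (Hsw Hhd (chainJ p Gp) NJ).
    assert (LJ : last (map J (pre p)) (J [x0]) = J p) by (rewrite Ep, map_app; apply last_last).
    rewrite LJ in Hsw.
    eapply eq_trans'; [|eapply eq_trans'; [exact Hsw| exact HI]].
    rewrite Hl0. fold c0.
    rewrite Ep'. rewrite map_app, rev_app_distr. simpl.
    rewrite <- !app_assoc. simpl.
    assert (R1 : Redge R c0 (J p)) by (eapply Redge_mix; eauto).
    assert (R2 : Redge R (J p) c') by (eapply Redge_mix; eauto).
    assert (R3 : Redge R c0 c') by (eapply Redge_mix; eauto).
    assert (R4 : Redge R c' (J p')) by (eapply Redge_mix; eauto).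
    assert (R5 : Redge R (J p) (J p')) by (eapply Redge_mix; eauto).
    eapply eq_trans'.
    { apply eq_sym'. apply (@eq_tri _ R l0 c0 (J p) c' (J p' :: rev (map J P') ++ [y0])). s3; eauto. }
    replace (l0 ++ c0 :: J p :: c' :: J p' :: rev (map J P') ++ [y0]) with
      ((l0 ++ [c0]) ++ J p :: c' :: J p' :: rev (map J P') ++ [y0]) by (rewrite <- app_assoc; reflexivity).
    eapply eq_trans'. { apply eq_tri. s3; eauto. }
    rewrite <- app_assoc. apply eq_refl'.
Qed.

Lemma loop l : is_epath (Fstar G) y0 y0 l -> ep_equiv R l [y0].
Proof.
  intros (Hh&Hl&Hc).
  assert (Hn : l <> []) by (destruct l; simpl in Hh; congruence).
  destruct (tele l Hn Hh Hc) as (p&Hp&HI).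
  rewrite Hl in Hp.
  destruct (Hy0) as [Hy1 Hy2].
  assert (Gx0 : Gd [x0]) by (split; simpl; auto).
  assert (Fx0 : gp_cls y0 F [x0]) by (apply Hy2; auto).
  assert (Jx0 : gp_cls (J [x0]) F [x0]) by (apply J_cls; auto).
  destruct (clsG y0 p Hp) as (Gp&_&Fp).
  destruct (J_cls p Gp) as [Jp _].
  assert (A : ep_equiv G [x0] p) by (eapply cls_equiv; [exact HG| apply Hy2; auto| exact Hp]).
  assert (AF : ep_equiv F [x0] p) by (eapply eq_mono; eauto).
  assert (C1 : Close [x0] p) by (apply close_equiv; auto; apply Gd_ne; auto).
  assert (C2 : Close p [x0]) by (apply close_equiv; [apply eq_sym'; auto| discriminate]).
  assert (C0 := close_self [x0] Gx0). assert (Cp := close_self p Gp).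
  assert (N := hom_NL [x0] p A Gx0). assert (NJ := NLJ [x0] p N).
  simpl in NJ.
  assert (Hsw := swap R l [J [x0]] (map J (pre p)) [y0] (J [x0]) eq_refl I NJ).
  simpl in Hsw.
  destruct (snoc_decomp l y0 Hn) as [l0 Hl0]. rewrite Hl in Hl0.
  destruct (pre_last p (Gd_ne p Gp)) as [Pp Ep].
  assert (R1 : Redge R y0 (J [x0])) by (eapply Redge_mix; eauto).
  assert (R2 : Redge R (J [x0]) (J p)) by (eapply Redge_mix; eauto).
  assert (R3 : Redge R y0 (J p)) by (eapply Redge_mix; eauto).
  eapply eq_trans'; [|exact HI].
  eapply eq_trans'.
  2:{ rewrite Hl0, Ep, map_app, rev_app_distr. simpl. rewrite <- !app_assoc. simpl.
      apply (@eq_tri _ R l0 y0 (J [x0]) (J p) (rev (map J Pp) ++ [y0])).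
      s3; auto. }
  rewrite Hl0, Ep, map_app, rev_app_distr in Hsw. simpl in Hsw. rewrite <- !app_assoc in Hsw.
  simpl in Hsw.
  eapply eq_trans'; [|apply eq_sym'; exact Hsw].
  rewrite Hl0. apply eq_sym'.
  eapply eq_trans'. { apply (@eq_tri _ R l0 y0 (J [x0]) y0 []). s3; auto using Redge_sym.
    eapply Redge_refl; eauto. }
  apply eq_dup.
Qed.
End Main.

Lemma Fstar_mono (X : UniformSpace) (x0 : X) (G F : X -> X -> Prop) (c d : GPath X x0) :
  entourage X G -> entourage X F -> subrel G F -> Fstar G c d -> Fstar F c d.
Proof.
  intros HG HF S (pc&pd&Hc&Hd&HH). unfold F_homotopic in HH.
  destruct HH as (xc&yc&xd&yd&E1&E2&G1&G2&EE).
  exists pc, pd. split. { exact (gp_compat c HF HG S pc Hc). } split. { exact (gp_compat d HF HG S pd Hd). }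
  unfold F_homotopic. exists xc, yc, xd, yd.
  destruct E1 as (A1&A2&A3). destruct E2 as (B1&B2&B3).
  split; [split; [auto|split; [auto|eapply echain_mono; eauto]]|].
  split; [split; [auto|split; [auto|eapply echain_mono; eauto]]|].
  split; [auto|]. split; [auto|]. eapply eq_mono; eauto.
Qed.

Theorem mainTheorem11 (X : UniformSpace) (x0 : X) :
  is_uniform X -> uniformly_joinable X ->
  forall y0 : GP X x0, is_constant_gpath y0 -> pro_pi1_trivial (GP X x0) y0.
Proof.
  intros HU HJ y0 Hy0 E HE.
  destruct HE as (F & HF & HFE).
  destruct (HJ F HF) as (G1 & HG1 & Hjoin).
  assert (HU2 := HU). unfold is_uniform in HU2. destruct HU2 as (_&_&Hsup&Hint&Hsym&_).
  set (G := fun a b : X => (G1 a b /\ F a b) /\ (G1 b a /\ F b a)).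
  assert (HG : entourage X G).
  { assert (H1 : entourage X (fun a b => G1 a b /\ F a b)) by (apply Hint; auto).
    assert (H2 := Hsym _ H1). simpl in H2.
    exact (Hint _ _ H1 H2). }
  assert (HGF : subrel G F) by (intros a b H; apply H).
  exists (Fstar G). split; [|split].
  - exists G. split; auto. intros a b H; exact H.
  - intros c d H. apply HFE. eapply Fstar_mono; eauto.
  - intros p Hp.
    eapply (loop X x0 y0 Hy0 HU F HF G1 Hjoin G HG).
    all: try (intros a b H; unfold G in *; tauto).
    all: eauto.
Qed.
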